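(* Let $a\ge7$ be an odd integer and $M_a=(4,6,a,a+2)$. Then $$I_{M_a}=\mathrm{rad}\big(x_1^{(a+1)/2}-x_3x_4,\;x_1^3-x_2^2,\;x_3^{a+2}-x_4^{a},\;x_1x_4-x_2x_3\big)$$ in $K[x_1,x_2,x_3,x_4]$, for any field $K$.
   Context: For a $1\times n$ integer row matrix $M=(a_1,\dots,a_n)$ (positive entries), the toric ideal $I_M\subseteq K[x_1,\dots,x_n]$ is the kernel of $K[x_1,\dots,x_n]\to K[t]$, $x_i\mapsto t^{a_i}$. *)

(* Defs.v *)
From HB Require Import structures.
From mathcomp Require Import all_boot all_algebra.
From mathcomp Require Import mpoly.
Set Implicit Arguments. Unset Strict Implicit. Unset Printing Implicit Defensive.
Import GRing.Theory.
Local Open Scope ring_scope.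

(* Toric ideal of the 1 x n row matrix M = (M_0,...,M_{n-1}) of positive
   integers: the kernel of the K-algebra map K[x_1..x_n] -> K[t],
   x_i |-> t^(M_i). *)
Definition toric_ideal (K : fieldType) (n : nat) (M : 'I_n -> nat)
  : {mpoly K[n]} -> Prop :=
  fun p => mmap (fun c : K => c%:P) (fun i => 'X^(M i) : {poly K}) p = 0.

Definition in_ideal (K : fieldType) (n k : nat) (g : 'I_k -> {mpoly K[n]})
  (p : {mpoly K[n]}) : Prop :=
  exists c : 'I_k -> {mpoly K[n]}, p = \sum_(j < k) c j * g j.

Definition in_rad_ideal (K : fieldType) (n k : nat) (g : 'I_k -> {mpoly K[n]})
  (p : {mpoly K[n]}) : Prop :=
  exists e : nat, in_ideal g (p ^+ e).

Definition Ma (a : nat) : 'I_4 -> nat := fun i => nth 0%N [:: 4; 6; a; a + 2]%N i.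

(* Generators: x1^((a+1)/2) - x3 x4, x1^3 - x2^2, x3^(a+2) - x4^a, x1 x4 - x2 x3
   (variables x1..x4 are 'X_0..'X_3). *)
Definition gens (K : fieldType) (a : nat) : 'I_4 -> {mpoly K[4]} :=
  fun i => nth 0
   [:: 'X_0 ^+ ((a + 1) %/ 2) - 'X_2 * 'X_3;
       'X_0 ^+ 3 - 'X_1 ^+ 2;
       'X_2 ^+ (a + 2) - 'X_3 ^+ a;
       'X_0 * 'X_3 - 'X_1 * 'X_2] i.

(* Main.v *)
Require Import Defs.
From HB Require Import structures.
From mathcomp Require Import all_boot all_algebra.
From mathcomp Require Import mpoly.
From mathcomp Require Import ring zify.
Set Implicit Arguments. Unset Strict Implicit. Unset Printing Implicit Defensive.
Import GRing.Theory.
Local Open Scope ring_scope.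

Section Ideal.
Variables (K : fieldType) (b : nat).
Local Notation a := (b.*2.+1).
Local Notation MP := {mpoly K[4]}.
Local Notation x0 := ('X_0 : MP).
Local Notation x1 := ('X_1 : MP).
Local Notation x2 := ('X_2 : MP).
Local Notation x3 := ('X_3 : MP).

Definition J (p : MP) := in_ideal (gens K a) p.

Lemma J0 : J 0.
Proof. by exists (fun _ => 0); rewrite big1 // => j _; rewrite mul0r. Qed.

Lemma JD p q : J p -> J q -> J (p + q).
Proof.
case=> c1 -> [c2 ->]; exists (fun j => c1 j + c2 j).
by rewrite -big_split; apply: eq_bigr => j _; rewrite mulrDl.
Qed.

Lemma JM q p : J p -> J (q * p).
Proof.
case=> c ->; exists (fun j => q * c j).
by rewrite mulr_sumr; apply: eq_bigr => j _; rewrite mulrA.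
Qed.

Lemma JN p : J p -> J (- p).
Proof. by move=> h; rewrite -mulN1r; apply: JM. Qed.

Lemma JB p q : J p -> J q -> J (p - q).
Proof. by move=> hp hq; apply: JD => //; apply: JN. Qed.

Lemma Jg j : J (gens K a j).
Proof.
exists (fun k => (k == j)%:R); rewrite (bigD1 j) //= eqxx mul1r big1 ?addr0 //.
by move=> k /negbTE ->; rewrite mul0r.
Qed.

Lemma Jsum (I : Type) (s : seq I) (F : I -> MP) :
  (forall i, J (F i)) -> J (\sum_(i <- s) F i).
Proof.
move=> h; elim: s => [|x s ih]; first by rewrite big_nil; apply: J0.
by rewrite big_cons; apply: JD.
Qed.

Lemma JZ c p : J p -> J (c *: p).
Proof. by move=> h; rewrite -mul_mpolyC; apply: JM. Qed.

Lemma JMn p k : J p -> J (p *+ k).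
Proof. by move=> h; rewrite -mulr_natl; apply: JM. Qed.

Lemma halfa : ((a + 1) %/ 2 = b.+1)%N.
Proof. lia. Qed.

Lemma gens0 : gens K a 0 = x0 ^+ b.+1 - x2 * x3.
Proof. by rewrite /gens /= halfa. Qed.
Lemma gens1 : gens K a 1 = x0 ^+ 3 - x1 ^+ 2.
Proof. by []. Qed.
Lemma gens2 : gens K a 2 = x2 ^+ a.+2 - x3 ^+ a.
Proof. by rewrite /gens /= addn2. Qed.
Lemma gens3 : gens K a 3 = x0 * x3 - x1 * x2.
Proof. by []. Qed.

Lemma Jcomb c0 c1 c2 c3 p :
  p = c0 * (x0 ^+ b.+1 - x2 * x3) + c1 * (x0 ^+ 3 - x1 ^+ 2)
    + c2 * (x2 ^+ a.+2 - x3 ^+ a) + c3 * (x0 * x3 - x1 * x2) -> J p.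
Proof.
move=> ->; rewrite -gens0 -gens1 -gens2 -gens3.
by repeat apply: JD; apply: JM; apply: Jg.
Qed.


Lemma Jeq p q : J q -> p = q -> J p.
Proof. by move=> h ->. Qed.

Lemma oddE w : odd w = (w %% 2 == 1)%N.
Proof. by rewrite modn2; case: odd. Qed.

Definition E (w : nat) : MP :=
  if (w %% 4 == 0)%N then x0 ^+ (w %/ 4) else x1 * x0 ^+ ((w - 6) %/ 4).
Definition nf (w : nat) : MP := if odd w then x2 * E (w - a) else E w.

Lemma E_x0 w : ~~ odd w -> (6 <= w)%N -> x0 * E w = E (w + 4).
Proof.
rewrite oddE /E => ho hw.
rewrite modnDr.
case: ifP => h.
  by rewrite -exprS; congr (_ ^+ _); move/eqP: h; lia.
by rewrite mulrCA -exprS; congr (_ * _ ^+ _); move/negbT: h; lia.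
Qed.

Lemma E_x0n k w : ~~ odd w -> (6 <= w)%N -> x0 ^+ k * E w = E (w + 4 * k).
Proof.
move=> ho hw; elim: k => [|k ih]; first by rewrite expr0 mul1r muln0 addn0.
rewrite exprS -mulrA ih E_x0; first by congr E; lia.
  by rewrite oddE in ho *; lia.
lia.
Qed.

Lemma E_x1 w : ~~ odd w -> (6 <= w)%N -> J (x1 * E w - E (w + 6)).
Proof.
rewrite oddE /E => ho hw.
case: ifP => h.
  have -> : ((w + 6) %% 4 == 0)%N = false by apply/negbTE; move/eqP: h; lia.
  have -> : ((w + 6 - 6) %/ 4 = w %/ 4)%N by lia.
  by rewrite subrr; apply: J0.
have -> : ((w + 6) %% 4 == 0)%N = true by apply/eqP; move/negbT: h; lia.
have -> : ((w + 6) %/ 4 = (w - 6) %/ 4 + 3)%N by move/negbT: h; lia.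
apply: (Jcomb (c0 := 0) (c1 := - x0 ^+ ((w - 6) %/ 4)) (c2 := 0) (c3 := 0)).
rewrite exprD; ring.
Qed.

Lemma F2 : J (x0 ^+ 3 * x2 ^+ 2 - x1 * x0 ^+ b.+2).
Proof.
apply: (Jcomb (c0 := - x1 * x0) (c1 := x2 ^+ 2) (c2 := 0) (c3 := - x1 * x2)).
rewrite !exprS; ring.
Qed.

Lemma N0 w : (a + 6 <= w)%N -> x0 * nf w = nf (w + 4).
Proof.
move=> hw; rewrite /nf oddD /= addbF.
case: ifP => ho.
  rewrite mulrCA E_x0; first by congr (_ * E _); lia.
    by rewrite oddE in ho *; lia.
  lia.
by rewrite E_x0 // ?ho //; lia.
Qed.

Lemma N1 w : (a + 6 <= w)%N -> J (x1 * nf w - nf (w + 6)).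
Proof.
move=> hw; rewrite /nf oddD /= addbF.
case: ifP => ho.
  have -> : (w + 6 - a = (w - a) + 6)%N by lia.
  rewrite mulrCA -mulrBr; apply: JM; apply: E_x1.
    by rewrite oddE in ho *; lia.
  lia.
by apply: E_x1; [rewrite ho | lia].
Qed.

Lemma N2 w : (a + 6 <= w)%N -> J (x0 ^+ 3 * x2 * nf w - nf (w + a + 12)).
Proof.
move=> hw; rewrite /nf.
have -> : odd (w + a + 12) = ~~ odd w by rewrite !oddE; apply/idP/idP; lia.
case: ifP => ho /=.
  set v := (w - a)%N.
  have hv : ~~ odd v by rewrite /v oddE in ho *; lia.
  have h1 := JM (E v) F2.
  have h2 : x0 ^+ b.+2 * E v = E (v + 4 * b.+2) by apply: E_x0n => //; lia.
  have h3 : J (x1 * E (v + 4 * b.+2) - E (v + 4 * b.+2 + 6)).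
    by apply: E_x1; [rewrite oddE in hv *; lia | lia].
  have -> : (w + a + 12 = v + 4 * b.+2 + 6)%N by rewrite /v; lia.
  apply: (Jeq (JD h1 h3)).
  rewrite -h2; ring.
have -> : (w + a + 12 - a = w + 4 * 3)%N by lia.
rewrite -E_x0n ?ho //; last lia.
by apply: (Jeq J0); ring.
Qed.

Lemma N3 w : (a + 6 <= w)%N -> J (x0 ^+ 4 * x3 * nf w - nf (w + a + 18)).
Proof.
move=> hw.
have h1 := JM (x0 ^+ 3 * nf w) (Jg 3); rewrite gens3 in h1.
have h2 := JM x1 (N2 hw).
have h3 : J (x1 * nf (w + a + 12) - nf (w + a + 12 + 6)) by apply: N1; lia.
have -> : (w + a + 18 = w + a + 12 + 6)%N by lia.
apply: (Jeq (JD (JD h1 h2) h3)).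
rewrite exprS; ring.
Qed.


Definition wt (m : 'X_{1..4}) := (\sum_(i < 4) Ma a i * m i)%N.

Definition PN N q w := (a + 6 <= w + 4 * N)%N /\ J (x0 ^+ N * q - nf (w + 4 * N)).

Lemma PN_succ N q w : PN N q w -> PN N.+1 q w.
Proof.
case=> h1 h2; split; first lia.
have h3 := N0 h1.
have -> : (w + 4 * N.+1 = w + 4 * N + 4)%N by lia.
apply: (Jeq (JM x0 h2)); rewrite -h3 exprS; ring.
Qed.

Lemma PN_mono N N' q w : (N <= N')%N -> PN N q w -> PN N' q w.
Proof.
move=> /subnK <-; elim: (N' - N)%N => [|k ih] //= h.
by rewrite addSn; apply: PN_succ; apply: ih.
Qed.

Lemma PN_one : PN a.+4.+2 1 0.
Proof.
split; first lia.
rewrite /nf /E add0n.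
have -> : odd (4 * a.+4.+2) = false by rewrite oddE; apply/negbTE; lia.
have -> : ((4 * a.+4.+2) %% 4 == 0)%N = true by apply/eqP; lia.
have -> : ((4 * a.+4.+2) %/ 4 = a.+4.+2)%N by lia.
by rewrite mulr1 subrr; apply: J0.
Qed.

Lemma var_step (i : 'I_4) w : (a + 6 <= w)%N ->
  exists c, J (x0 ^+ c * 'X_i * nf w - nf (w + Ma a i + 4 * c)).
Proof.
move=> hw; case: i => [[|[|[|[|//]]]] Hi].
- have -> : Ordinal Hi = 0 by apply/val_inj.
  exists 0%N; rewrite expr0 mul1r N0 // addn0 subrr; exact: J0.
- have -> : Ordinal Hi = 1 by apply/val_inj.
  by exists 0%N; rewrite expr0 mul1r addn0; apply: N1.
- have -> : Ordinal Hi = 2 by apply/val_inj.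
  by exists 3%N; have := N2 hw; rewrite -addnA.
- have -> : Ordinal Hi = 3 by apply/val_inj.
  exists 4%N; have := N3 hw.
  rewrite [Ma a _]/Ma /=.
  by have -> : (w + (a + 2) + 4 * 4 = w + a + 18)%N by lia.
Qed.

Lemma PN_var N q w (i : 'I_4) : PN N q w -> exists N', PN N' ('X_i * q) (Ma a i + w).
Proof.
case=> h1 h2; have [c hc] := var_step i h1.
exists (N + c)%N; split; first lia.
have -> : (Ma a i + w + 4 * (N + c) = w + 4 * N + Ma a i + 4 * c)%N by lia.
apply: (Jeq (JD (JM (x0 ^+ c * 'X_i) h2) hc)); rewrite exprD; ring.
Qed.

Definition Pex q w := exists N, PN N q w.

Lemma Pex_pow q w (i : 'I_4) k : Pex q w -> Pex ('X_i ^+ k * q) (Ma a i * k + w).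
Proof.
move=> h; elim: k => [|k [N ih]]; first by rewrite expr0 mul1r muln0 add0n.
have [N' h'] := PN_var i ih.
exists N'; rewrite exprS -mulrA.
by have -> : (Ma a i * k.+1 + w = Ma a i + (Ma a i * k + w))%N by rewrite mulnS addnA.
Qed.

Lemma Pex_mono (m : 'X_{1..4}) : Pex 'X_[m] (wt m).
Proof.
rewrite mpolyXE_id /wt; elim/big_rec2: _ => [|i y1 y2 _ h].
  by exists a.+4.+2; apply: PN_one.
by apply: Pex_pow.
Qed.

Lemma Pex_seq (s : seq 'X_{1..4}) :
  exists N, forall m, m \in s -> PN N 'X_[m] (wt m).
Proof.
elim: s => [|m s [N ih]]; first by exists 0%N.
have [N1 h1] := Pex_mono m.
exists (N + N1)%N => m'; rewrite inE => /orP [/eqP -> | hm].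
  by apply: (PN_mono _ h1); lia.
by apply: (PN_mono _ (ih _ hm)); lia.
Qed.


Lemma Jsum_seq (I : eqType) (s : seq I) (F : I -> MP) :
  (forall i, i \in s -> J (F i)) -> J (\sum_(i <- s) F i).
Proof.
elim: s => [|x s ih] h; first by rewrite big_nil; apply: J0.
rewrite big_cons; apply: JD; first by apply: h; rewrite inE eqxx.
by apply: ih => i hi; apply: h; rewrite inE hi orbT.
Qed.

Definition phi (p : MP) : {poly K} :=
  mmap (fun c : K => c%:P) (fun i => 'X^(Ma a i) : {poly K}) p.

Lemma phiE p : phi p = \sum_(m <- msupp p) (p@_m)%:P * 'X^(wt m).
Proof.
rewrite /phi /mmap; apply: eq_bigr => m _; congr (_ * _).
rewrite /mmap1 /wt; elim/big_rec2: _ => [|i y1 y2 _ ->]; first by rewrite expr0.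
by rewrite -exprM -exprD.
Qed.

Lemma phi_coef p k : (phi p)`_k = \sum_(m <- msupp p) p@_m * (wt m == k)%:R.
Proof.
rewrite phiE coef_sum; apply: eq_bigr => m _.
by rewrite coefCM coefXn eq_sym.
Qed.

Lemma sum_pick (n w : nat) (c : K) (F : nat -> MP) : (w < n)%N ->
  \sum_(k < n) (c * (w == k)%:R) *: F k = c *: F w.
Proof.
move=> hw; rewrite (bigD1 (Ordinal hw)) //= eqxx mulr1 big1 ?addr0 //.
move=> k hk; have -> : (w == k) = false.
  by apply/negbTE; apply: contra hk => /eqP hk; apply/eqP/val_inj.
by rewrite mulr0 scale0r.
Qed.

Lemma kernel_x0 p : phi p = 0 -> exists N, J (x0 ^+ N * p).
Proof.
move=> hp; have [N hN] := Pex_seq (msupp p).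
exists N.
set S := \sum_(m <- msupp p) p@_m *: nf (wt m + 4 * N).
have h1 : J (x0 ^+ N * p - S).
  rewrite {1}(mpolyE p) mulr_sumr /S -sumrB; apply: Jsum_seq => m hm.
  rewrite -scalerAr -scalerBr; apply: JZ.
  by case: (hN m hm).
suff hS : S = 0 by rewrite hS subr0 in h1.
pose n := (\max_(m <- msupp p) wt m).+1.
rewrite /S big_seq.
rewrite (eq_bigr (fun m => \sum_(k < n) (p@_m * (wt m == k)%:R) *: nf (k + 4 * N))); last first.
  move=> m hm; rewrite (@sum_pick n (wt m) p@_m (fun k => nf (k + 4 * N))) //; rewrite /n ltnS.
  by apply: (leq_bigmax_seq (P := xpredT)).
rewrite -big_seq exchange_big /= big1 // => k _.
rewrite -scaler_suml -phi_coef hp coef0 scale0r //.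
Qed.


Definition I' (u : MP) := exists q, J (u - x0 * q).

Lemma I'D u v : I' u -> I' v -> I' (u + v).
Proof.
case=> q1 h1 [q2 h2]; exists (q1 + q2); apply: (Jeq (JD h1 h2)); ring.
Qed.

Lemma I'M w u : I' u -> I' (w * u).
Proof.
case=> q h; exists (w * q); apply: (Jeq (JM w h)); ring.
Qed.

Lemma I'0 : I' 0.
Proof. by exists 0; rewrite mulr0 subr0; apply: J0. Qed.

Lemma I'_of_J u : J u -> I' u.
Proof. by move=> h; exists 0; rewrite mulr0 subr0. Qed.

Lemma I'X u A k : I' (u ^+ A) -> I' (u ^+ (A + k)).
Proof. by move=> h; rewrite exprD mulrC; apply: I'M. Qed.

Lemma nilsum u v A B : I' (u ^+ A) -> I' (v ^+ B) -> I' ((u + v) ^+ (A + B)).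
Proof.
move=> hu hv; rewrite exprDn.
elim/big_ind: _ => [|x y|]; [exact: I'0 | exact: I'D |].
move=> i _; rewrite -mulr_natl; apply: I'M.
case: (leqP B i) => hi.
  have -> : v ^+ i = v ^+ (i - B) * v ^+ B by rewrite -exprD subnK.
  by rewrite mulrA; apply: I'M.
have -> : (A + B - i = A + (B - i))%N by lia.
by rewrite mulrC; apply: I'M; apply: I'X.
Qed.


Lemma nil_seq (I : eqType) (s : seq I) (F : I -> MP) :
  (forall i, i \in s -> exists e, I' (F i ^+ e)) ->
  exists e, I' ((\sum_(i <- s) F i) ^+ e).
Proof.
elim: s => [|x s ih] h.
  by exists 1%N; rewrite big_nil expr1; apply: I'0.
have [e1 h1] := h x (mem_head x s).
have [e2 h2] := ih (fun i hi => h i (@mem_behead _ (x :: s) _ hi)).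
by exists (e1 + e2)%N; rewrite big_cons; apply: nilsum.
Qed.

Lemma var_nil (i : 'I_4) : I' ('X_i ^+ a.+3).
Proof.
case: i => [[|[|[|[|//]]]] Hi].
- have -> : Ordinal Hi = 0 by apply/val_inj.
  by exists (x0 ^+ a.+2); rewrite -exprS subrr; apply: J0.
- have -> : Ordinal Hi = 1 by apply/val_inj.
  have -> : (a.+3 = 2 + a.+1)%N by lia.
  apply: I'X; exists (x0 ^+ 2).
  by apply: (Jcomb (c0 := 0) (c1 := -1) (c2 := 0) (c3 := 0)); ring.
- have -> : Ordinal Hi = 2 by apply/val_inj.
  exists (x3 ^+ b.*2 * x0 ^+ b).
  apply: (Jcomb (c0 := - x3 ^+ b.*2) (c1 := 0) (c2 := x2) (c3 := 0)).
  rewrite !exprS; ring.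
- have -> : Ordinal Hi = 3 by apply/val_inj.
  exists (x3 ^+ 2 * x2 ^+ a.+1 * x0 ^+ b).
  apply: (Jcomb (c0 := - x3 ^+ 2 * x2 ^+ a.+1) (c1 := 0) (c2 := - x3 ^+ 3) (c3 := 0)).
  rewrite !exprS; ring.
Qed.

Lemma Ma_pos (i : 'I_4) : (0 < Ma a i)%N.
Proof. by case: i => [[|[|[|[|//]]]] Hi]; rewrite /Ma /= ?addn2. Qed.

Lemma wt_eq0 m : (wt m == 0)%N = (m == 0%MM).
Proof.
apply/idP/idP.
  move=> /eqP h; apply/eqP/mnmP => i; rewrite mnm0E.
  have : (Ma a i * m i <= wt m)%N by rewrite /wt (bigD1 i) //= leq_addr.
  rewrite h leqn0 muln_eq0 => /orP [|/eqP //].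
  by rewrite eqn0Ngt Ma_pos.
by move/eqP ->; rewrite /wt big1 // => i _; rewrite mnm0E muln0.
Qed.

Lemma kernel_const p : phi p = 0 -> p@_0 = 0.
Proof.
move=> hp.
have := congr1 (fun q : {poly K} => q`_0) hp; rewrite /= phi_coef coef0 => <-.
rewrite {1}(mpolyE p) raddf_sum /=; apply: eq_bigr => m _.
by rewrite mcoeffZ mcoeffX wt_eq0.
Qed.

Lemma kernel_nil p : phi p = 0 -> exists e, I' (p ^+ e).
Proof.
move=> hp; rewrite (mpolyE p); apply: nil_seq => m _.
have [->|nz] := eqVneq m 0%MM.
  by exists 1%N; rewrite kernel_const // scale0r expr1; apply: I'0.
have [i hi] : exists i, (0 < m i)%N.
  apply/existsP; apply: contraR nz; rewrite negb_exists => /forallP h.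
  by apply/eqP/mnmP => i; rewrite mnm0E; have := h i; rewrite -leqNgt leqn0 => /eqP.
have hle : (U_(i) <= m)%MM.
  apply/mnm_lepP => j; rewrite mnm1E; case: eqP => [<-|] //.
have -> : p@_m *: 'X_[m] = 'X_i * (p@_m *: 'X_[m - U_(i)]).
  by rewrite -scalerAr -mpolyXD addmC submK.
by exists a.+3; rewrite exprMn mulrC; apply: I'M; apply: var_nil.
Qed.

Lemma powJ j y N : J j -> J ((j + y) ^+ N - y ^+ N).
Proof.
move=> hj; elim: N => [|N ih]; first by rewrite !expr0 subrr; apply: J0.
apply: (Jeq (JD (JM (j + y) ih) (JM (y ^+ N) hj))); rewrite !exprS; ring.
Qed.

Lemma kernel_rad p : phi p = 0 -> exists e, J (p ^+ e).
Proof.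
move=> hp; have [N hN] := kernel_x0 hp; have [k [q hq]] := kernel_nil hp.
exists (k * N).+1.
have h1 := JM p (powJ (x0 * q) N hq).
have h2 := JM (q ^+ N) hN.
apply: (Jeq (JD h1 h2)).
rewrite exprS exprM exprMn subrK; ring.
Qed.


Lemma phiM x y : phi (x * y) = phi x * phi y.
Proof. exact: (rmorphM (mmap (@polyC K) (fun i => 'X^(Ma a i) : {poly K}))). Qed.
Lemma phiB x y : phi (x - y) = phi x - phi y.
Proof. exact: (rmorphB (mmap (@polyC K) (fun i => 'X^(Ma a i) : {poly K}))). Qed.
Lemma phiXn x k : phi (x ^+ k) = phi x ^+ k.
Proof. exact: (rmorphXn (mmap (@polyC K) (fun i => 'X^(Ma a i) : {poly K}))). Qed.
Lemma phi_sum (I : Type) (s : seq I) (F : I -> MP) :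
  phi (\sum_(i <- s) F i) = \sum_(i <- s) phi (F i).
Proof. exact: (rmorph_sum (mmap (@polyC K) (fun i => 'X^(Ma a i) : {poly K}))). Qed.
Lemma phiX (i : 'I_4) : phi 'X_i = 'X^(Ma a i).
Proof. by rewrite /phi (@mmapX _ _ _ _ (@polyC K) U_(i)) mmap1U. Qed.

Lemma phi_gens j : phi (gens K a j) = 0.
Proof.
case: j => [[|[|[|[|//]]]] Hi].
- have -> : Ordinal Hi = 0 by apply/val_inj.
  rewrite gens0 phiB phiM !phiXn !phiX /Ma /= -exprM -exprD.
  have -> : (4 * b.+1 = a + (a + 2))%N by lia.
  by rewrite subrr.
- have -> : Ordinal Hi = 1 by apply/val_inj.
  by rewrite gens1 phiB !phiXn !phiX /Ma /= -!exprM subrr.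
- have -> : Ordinal Hi = 2 by apply/val_inj.
  rewrite gens2 phiB !phiXn !phiX /Ma /= -!exprM.
  have -> : (a * a.+2 = (a + 2) * a)%N by lia.
  by rewrite subrr.
- have -> : Ordinal Hi = 3 by apply/val_inj.
  rewrite gens3 phiB !phiM !phiX /Ma /= -!exprD.
  have -> : (4 + (a + 2) = 6 + a)%N by lia.
  by rewrite subrr.
Qed.

Lemma rad_kernel p e : J (p ^+ e) -> phi p = 0.
Proof.
case=> c hc.
have : phi (p ^+ e) = 0.
  rewrite hc phi_sum big1 // => j _; by rewrite phiM phi_gens mulr0.
by rewrite phiXn => /eqP; rewrite expf_eq0 => /andP [_ /eqP].
Qed.

End Ideal.

Theorem mainTheorem8 (K : fieldType) (a : nat) :
  (7 <= a)%N -> odd a ->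
  forall p : {mpoly K[4]}, toric_ideal (Ma a) p <-> in_rad_ideal (gens K a) p.
Proof.
move=> ha hodd p.
have ea : a = (a./2).*2.+1 by rewrite -[LHS]odd_double_half hodd add1n.
rewrite ea; split.
  by move=> h; apply: (@kernel_rad K a./2 p h).
by case=> e h; apply: (@rad_kernel K a./2 p e h).
Qed.
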